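(* Let $n\ge2$, $\nu\in I^n$ with $\nu_a=\nu_{a+1}$ for some $1\le a<n$, let $M$ be an $R(n)$-module and $f\in\mathbf k[x_1,\dots,x_n]$. If $f\,e(\nu)M=0$, then $$(\partial_af)\,\mathcal P_{\nu_a}(x_a,x_{a+1})\mathcal P_{\nu_a}(x_{a+1},x_a)\,e(\nu)M=0\quad\text{and}\quad(s_af)\,\mathcal P_{\nu_a}(x_a,x_{a+1})\mathcal P_{\nu_a}(x_{a+1},x_a)\,e(\nu)M=0,$$ where $s_af$ is $f$ with $x_a,x_{a+1}$ interchanged and $\partial_af=(s_af-f)/(x_a-x_{a+1})$.
   Context: Let $I$ be a finite set and $\mathtt A=(a_{ij})_{i,j\in I}$ an integer matrix with $a_{ii}=2$ or $a_{ii}\in 2\mathbb Z_{\le 0}$, $a_{ij}\le 0$ for $i\neq j$, and $a_{ij}=0\iff a_{ji}=0$. Assume there are $d_i\in\mathbb Z_{>0}$ with $(d_ia_{ij})$ symmetric, and fix simple roots $\alpha_i$ with symmetric form $(\alpha_i|\alpha_j)=d_ia_{ij}$. Let $\mathbf k=\bigoplus_{n\ge0}\mathbf k_n$ be a graded commutative ring, $\mathcal Q_{i,j}(u,v)\in\mathbf k[u,v]$ with $\mathcal Q_{i,j}(u,v)=\mathcal Q_{j,i}(v,u)$, $\mathcal Q_{i,i}=0$, and for $i\ne j$, $\mathcal Q_{i,j}=\sum_{d_ip+d_jq\le-(\alpha_i|\alpha_j)}t^{p,q}_{i,j}u^pv^q$ with $t^{-a_{ij},0}_{i,j}\in\mathbf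 k_0^\times$, $t^{p,q}_{i,j}\in\mathbf k_{-2((\alpha_i|\alpha_j)+d_ip+d_jq)}$, $t^{p,q}_{i,j}=t^{q,p}_{j,i}$; $\mathcal P_i(u,v)=\sum_{p+q\le1-a_{ii}/2}w_i^{p,q}u^pv^q$ with $w_i^{1-a_{ii}/2,0},w_i^{0,1-a_{ii}/2}\in\mathbf k_0^\times$, $w_i^{p,q}\in\mathbf k_{2d_i(1-p-q-a_{ii}/2)}$. $R(n)$ is the $\mathbf k$-algebra generated by $e(\nu)$ ($\nu\in I^n$), $x_k$, $\tau_\ell$ with relations: $e(\nu)e(\nu')=\delta_{\nu\nu'}e(\nu)$, $\sum e(\nu)=1$, $x_kx_l=x_lx_k$, $x_ke(\nu)=e(\nu)x_k$, $\tau_\ell e(\nu)=e(s_\ell\nu)\tau_\ell$, $\tau_k\tau_\ell=\tau_\ell\tau_k$ ($|k-\ell|>1$); $\tau_k^2e(\nu)=(\partial_k\mathcal P_{\nu_k}(x_k,x_{k+1}))\tau_ke(\nu)$ if $\nu_k=\nu_{k+1}$, else $\mathcal Q_{\nu_k,\nu_{k+1}}(x_k,x_{k+1})e(\nu)$; $(\tau_kx_\ell-x_{s_k(\ell)}\tau_k)e(\nu)$ is $-\mathcal P_{\nu_k}(x_k,x_{k+1})e(\nu)$ if $\ell=k,\nu_k=\nu_{k+1}$, is $\mathcal P_{\nu_k}(x_k,x_{k+1})e(\nu)$ if $\ell=k+1,\nu_k=\nu_{k+1}$, and $0$ otherwise; $(\tau_{k+1}\tau_k\tau_{k+1}-\tau_k\tau_{k+1}\tau_k)e(\nu)$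 is $\mathcal P_{\nu_k}(x_k,x_{k+2})\overline{\mathcal Q}_{\nu_k,\nu_{k+1}}(x_k,x_{k+1},x_{k+2})e(\nu)$ if $\nu_k=\nu_{k+2}\ne\nu_{k+1}$, is $\overline{\mathcal P}'_{\nu_k}(x_k,x_{k+1},x_{k+2})\tau_ke(\nu)+\overline{\mathcal P}''_{\nu_k}(x_k,x_{k+1},x_{k+2})\tau_{k+1}e(\nu)$ if $\nu_k=\nu_{k+1}=\nu_{k+2}$, and $0$ otherwise; where $s_k=(k,k+1)$ acts on $I^n$ and on polynomials, $\partial_kf=(s_kf-f)/(x_k-x_{k+1})$, $\overline{\mathcal Q}_{i,j}(u,v,w)=\frac{\mathcal Q_{i,j}(u,v)-\mathcal Q_{i,j}(w,v)}{u-w}$, $\overline{\mathcal P}'_i(u,v,w)=\frac{\mathcal P_i(v,u)\mathcal P_i(u,w)}{(u-v)(u-w)}+\frac{\mathcal P_i(u,w)\mathcal P_i(v,w)}{(u-w)(v-w)}-\frac{\mathcal P_i(u,v)\mathcal P_i(v,w)}{(u-v)(v-w)}$, $\overline{\mathcal P}''_i(u,v,w)=-\frac{\mathcal P_i(u,v)\mathcal P_i(u,w)}{(u-v)(u-w)}-\frac{\mathcal P_i(u,w)\mathcal P_i(w,v)}{(u-w)(v-w)}+\frac{\mathcal P_i(u,v)\mathcal P_i(v,w)}{(u-v)(v-w)}$. *)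

(* Defs.v *)
From HB Require Import structures.
From mathcomp Require Import all_boot all_order all_algebra.
From mathcomp Require Import all_fingroup.
From mathcomp Require Export mpoly.
From Stdlib Require Import ClassicalEpsilon.

Set Implicit Arguments.
Unset Strict Implicit.
Unset Printing Implicit Defensive.

Import Order.TTheory GRing.Theory Num.Theory.
Local Open Scope ring_scope.

(* (alpha_i | alpha_j) := d_i * a_ij.                                   *)

Definition rform (I : finType) (A : I -> I -> int) (d : I -> nat) (i j : I) : int :=
  (d i)%:Z * A i j.

Record cartan_datum (I : finType) (A : I -> I -> int) (d : I -> nat) : Prop := {
  cd_diag : forall i, A i i = 2 \/ (A i i <= 0 /\ (2 %| A i i)%Z);
  cd_offdiag : forall i j, i != j -> A i j <= 0;
  cd_zero : forall i j, (A i j == 0) = (A j i == 0);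
  cd_dpos : forall i, (0 < d i)%N;
  cd_sym : forall i j, rform A d i j = rform A d j i
}.

(* Graded commutative ring k = (+)_{m >= 0} k_m, the pieces being given *)
(* by the predicates kdeg m.                                             *)

Record graded_ring (k : comNzRingType) (kdeg : nat -> pred k) : Prop := {
  gr_zero : forall m, kdeg m 0;
  gr_add : forall m a b, kdeg m a -> kdeg m b -> kdeg m (a + b);
  gr_opp : forall m a, kdeg m a -> kdeg m (- a);
  gr_one : kdeg 0 1;
  gr_mul : forall m1 m2 a b, kdeg m1 a -> kdeg m2 b -> kdeg (m1 + m2) (a * b);
  gr_span : forall c : k, exists (N : nat) (c_ : nat -> k),
      (forall m, kdeg m (c_ m)) /\ c = \sum_(m < N) c_ m;
  gr_direct : forall (N : nat) (c_ : nat -> k),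
      (forall m, kdeg m (c_ m)) -> \sum_(m < N) c_ m = 0 ->
      forall m, (m < N)%N -> c_ m = 0
}.

Definition Pbound (I : finType) (A : I -> I -> int) (i : I) : nat :=
  absz (1 - (A i i %/ 2)%Z).

Definition Qbound (I : finType) (A : I -> I -> int) (d : I -> nat) (i j : I) : nat :=
  absz (- rform A d i j).

Definition Qpol (I : finType) (A : I -> I -> int) (d : I -> nat)
  (k : comNzRingType) (t : I -> I -> nat -> nat -> k) (S : comAlgType k)
  (i j : I) (y z : S) : S :=
  if i == j then 0 else
  \sum_(p < (Qbound A d i j).+1) \sum_(q < (Qbound A d i j).+1
        | (d i * p + d j * q <= Qbound A d i j)%N)
     t i j p q *: (y ^+ p * z ^+ q).

Definition Ppol (I : finType) (A : I -> I -> int)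
  (k : comNzRingType) (w : I -> nat -> nat -> k) (S : comAlgType k)
  (i : I) (y z : S) : S :=
  \sum_(p < (Pbound A i).+1) \sum_(q < (Pbound A i).+1 | (p + q <= Pbound A i)%N)
     w i p q *: (y ^+ p * z ^+ q).

Definition kunit (k : comNzRingType) (c : k) : Prop := exists c' : k, c * c' = 1.

Record QP_datum (I : finType) (A : I -> I -> int) (d : I -> nat)
  (k : comNzRingType) (kdeg : nat -> pred k)
  (t : I -> I -> nat -> nat -> k) (w : I -> nat -> nat -> k) : Prop := {
  qp_t_lead : forall i j, i != j ->
      kdeg 0 (t i j (absz (- A i j)) 0%N) /\ kunit (t i j (absz (- A i j)) 0%N);
  qp_t_deg : forall i j p q, i != j ->
      ((d i)%:Z * p%:Z + (d j)%:Z * q%:Z <= - rform A d i j) ->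
      kdeg (absz ((-2)%R * (rform A d i j + (d i)%:Z * p%:Z + (d j)%:Z * q%:Z))) (t i j p q);
  qp_t_sym : forall i j p q, i != j ->
      ((d i)%:Z * p%:Z + (d j)%:Z * q%:Z <= - rform A d i j) ->
      t i j p q = t j i q p;
  qp_w_lead : forall i,
      kdeg 0 (w i (Pbound A i) 0%N) /\ kunit (w i (Pbound A i) 0%N) /\
      kdeg 0 (w i 0%N (Pbound A i)) /\ kunit (w i 0%N (Pbound A i));
  qp_w_deg : forall i p q, (p + q <= Pbound A i)%N ->
      kdeg (2 * d i * (Pbound A i - (p + q)))%N (w i p q)
}.

(* Exact division in k[x_1..x_n]: the polynomial g with N = D * g        *)
(* (used only where the paper asserts the quotient is a polynomial).    *)

Definition exdiv (k : comNzRingType) (n : nat) (D N : {mpoly k[n]}) : {mpoly k[n]} :=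
  match excluded_middle_informative (exists g, N = D * g) with
  | left H => proj1_sig (constructive_indefinite_description _ H)
  | right _ => 0
  end.

Definition sswap (k : comNzRingType) (n : nat) (a b : 'I_n) (f : {mpoly k[n]}) :=
  msym (tperm a b) f.

Definition ddiff (k : comNzRingType) (n : nat) (a b : 'I_n) (f : {mpoly k[n]}) :=
  exdiv ('X_a - 'X_b) (sswap a b f - f).

Definition Qbar (I : finType) (A : I -> I -> int) (d : I -> nat)
  (k : comNzRingType) (t : I -> I -> nat -> nat -> k) (n : nat)
  (i j : I) (a b c : 'I_n) : {mpoly k[n]} :=
  exdiv ('X_a - 'X_c)
    (Qpol A d t i j 'X_a 'X_b - Qpol A d t i j 'X_c 'X_b).

(* \bar P'_i(u,v,w) and \bar P''_i(u,v,w) at u = x_a, v = x_b, w = x_c,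
   obtained by clearing the common denominator (u-v)(u-w)(v-w). *)
Definition Pbar1 (I : finType) (A : I -> I -> int)
  (k : comNzRingType) (w : I -> nat -> nat -> k) (n : nat)
  (i : I) (a b c : 'I_n) : {mpoly k[n]} :=
  let P := Ppol A w i in
  let u := 'X_a in let v := 'X_b in let z := 'X_c in
  exdiv ((u - v) * (u - z) * (v - z))
    (P v u * P u z * (v - z) + P u z * P v z * (u - v) - P u v * P v z * (u - z)).

Definition Pbar2 (I : finType) (A : I -> I -> int)
  (k : comNzRingType) (w : I -> nat -> nat -> k) (n : nat)
  (i : I) (a b c : 'I_n) : {mpoly k[n]} :=
  let P := Ppol A w i in
  let u := 'X_a in let v := 'X_b in let z := 'X_c in
  exdiv ((u - v) * (u - z) * (v - z))
    (- (P u v * P u z * (v - z)) - P u z * P z v * (u - v) + P u v * P v z * (u - z)).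

(* Modules over R(n): a k-module M with k-linear operators e(nu), x_j,   *)
(* tau_k satisfying the defining relations of R(n).                      *)
(* tau is indexed by the left position k : 'I_n; only tau_k with         *)
(* k+1 < n (i.e. tau_1..tau_{n-1}) are generators of R(n).               *)

Section Action.
Variables (k : comNzRingType) (n : nat) (M : lmodType k).
Variable x : 'I_n -> M -> M.

Definition xmono (mm : 'X_{1..n}) (v : M) : M :=
  foldr (fun j u => iter (mm j) (x j) u) v (enum 'I_n).

Definition actp (f : {mpoly k[n]}) (v : M) : M :=
  \sum_(mm <- msupp f) f@_mm *: xmono mm v.
End Action.

Definition klinear (k : comNzRingType) (M : lmodType k) (g : M -> M) : Prop :=
  forall (c : k) (u v : M), g (c *: u + v) = c *: g u + g v.

Definition consec (n : nat) (a b : 'I_n) : bool := (val b == (val a).+1)%N.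

Definition swapseq (I : finType) (n : nat) (a b : 'I_n) (nu : {ffun 'I_n -> I})
  : {ffun 'I_n -> I} := [ffun j => nu (tperm a b j)].

Record is_Rmodule (I : finType) (A : I -> I -> int) (d : I -> nat)
  (k : comNzRingType) (t : I -> I -> nat -> nat -> k) (w : I -> nat -> nat -> k)
  (n : nat) (M : lmodType k)
  (e : {ffun 'I_n -> I} -> M -> M) (x : 'I_n -> M -> M) (tau : 'I_n -> M -> M)
  : Prop := {
  rm_lin_e : forall nu, klinear (e nu);
  rm_lin_x : forall j, klinear (x j);
  rm_lin_tau : forall j, klinear (tau j);
  rm_ee : forall nu nu' m, e nu (e nu' m) = if nu == nu' then e nu m else 0;
  rm_esum : forall m, \sum_(nu : {ffun 'I_n -> I}) e nu m = m;
  rm_xx : forall j l m, x j (x l m) = x l (x j m);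
  rm_xe : forall j nu m, x j (e nu m) = e nu (x j m);
  rm_taue : forall a b nu m, consec a b ->
      tau a (e nu m) = e (swapseq a b nu) (tau a m);
  rm_tautau_far : forall a b a' b' m, consec a b -> consec a' b' ->
      (1 < absz ((val a)%:Z - (val a')%:Z))%N ->
      tau a (tau a' m) = tau a' (tau a m);
  rm_tau2 : forall a b nu m, consec a b ->
      tau a (tau a (e nu m)) =
      if nu a == nu b then
        actp x (ddiff a b (Ppol A w (nu a) 'X_a 'X_b)) (tau a (e nu m))
      else actp x (Qpol A d t (nu a) (nu b) 'X_a 'X_b) (e nu m);
  rm_taux : forall a b j nu m, consec a b ->
      tau a (x j (e nu m)) - x (tperm a b j) (tau a (e nu m)) =
      if (nu a == nu b) && (j == a) then - actp x (Ppol A w (nu a) 'X_a 'X_b) (e nu m)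
      else if (nu a == nu b) && (j == b) then actp x (Ppol A w (nu a) 'X_a 'X_b) (e nu m)
      else 0;
  rm_braid : forall a b c nu m, consec a b -> consec b c ->
      tau b (tau a (tau b (e nu m))) - tau a (tau b (tau a (e nu m))) =
      if (nu a == nu c) && (nu a != nu b) then
        actp x (Ppol A w (nu a) 'X_a 'X_c * Qbar A d t (nu a) (nu b) a b c) (e nu m)
      else if (nu a == nu b) && (nu b == nu c) then
        actp x (Pbar1 A w (nu a) a b c) (tau a (e nu m)) +
        actp x (Pbar2 A w (nu a) a b c) (tau b (e nu m))
      else 0
}.

(* Main.v *)
Require Import Defs.
From HB Require Import structures.
From mathcomp Require Import all_boot all_order all_algebra all_fingroup.
From mathcomp Require Import mpoly ssrcomplements.
From Stdlib Require Import ClassicalEpsilon.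
From mathcomp Require Import ring.
Import GRing.Theory.
Local Open Scope ring_scope.
Set Implicit Arguments.
Unset Strict Implicit.

Section Lin.
Variables (k : comNzRingType) (M : lmodType k).

Lemma kl0 g : klinear g -> g (0 : M) = 0.
Proof. move=> H; have h := H 1 0 0; rewrite addr0 !scale1r in h.
by apply/(addrI (g 0)); rewrite addr0 -h. Qed.
Lemma klD g : klinear g -> forall u v : M, g (u + v) = g u + g v.
Proof. by move=> H u v; have := H 1 u v; rewrite !scale1r. Qed.
Lemma klZ g : klinear g -> forall c (u : M), g (c *: u) = c *: g u.
Proof. by move=> H c u; have := H c u 0; rewrite addr0 (@kl0 g H) addr0. Qed.
Lemma klN g : klinear g -> forall u : M, g (- u) = - g u.
Proof. by move=> H u; rewrite -scaleN1r klZ // scaleN1r. Qed.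
Lemma klB g : klinear g -> forall u v : M, g (u - v) = g u - g v.
Proof. by move=> H u v; rewrite klD // klN. Qed.
Lemma kl_sum g (T : Type) (r : seq T) (F : T -> M) : klinear g ->
  g (\sum_(i <- r) F i) = \sum_(i <- r) g (F i).
Proof. move=> H; elim/big_rec2: _ => [|i y1 y2 _ <-]; first exact: (@kl0 g).
exact: klD. Qed.
Lemma kl_comp (g h : M -> M) : klinear g -> klinear h -> klinear (fun v => g (h v)).
Proof. by move=> Hg Hh c u v; rewrite Hh Hg. Qed.
Lemma kl_id : @klinear k M (fun v : M => v). Proof. by []. Qed.
Lemma kl_iter (g : M -> M) m : klinear g -> klinear (iter m g).
Proof. move=> H; elim: m => [|m IH] // c u v; by rewrite !iterS IH H. Qed.
End Lin.
Section Xmono.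
Variables (k : comNzRingType) (M : lmodType k) (n : nat).
Variable x : 'I_n -> M -> M.
Hypothesis Hx : forall j, klinear (x j).
Hypothesis Hxx : forall j l v, x j (x l v) = x l (x j v).

Definition foldx (l : seq 'I_n) (m : 'X_{1..n}) (v : M) : M :=
  foldr (fun j u => iter (m j) (x j) u) v l.

Lemma xmonoE m v : xmono x m v = foldx (enum 'I_n) m v.
Proof. by []. Qed.

Lemma kl_foldx l m : klinear (foldx l m).
Proof.
elim: l => [|j l IH] /=; first exact: kl_id.
exact: (kl_comp (kl_iter _ (Hx j)) IH).
Qed.

Lemma comm_iter (g : M -> M) (f : M -> M) c :
  (forall w, g (f w) = f (g w)) -> forall w, g (iter c f w) = iter c f (g w).
Proof. move=> H; elim: c => [|c IH] w //; by rewrite !iterS H IH. Qed.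

Lemma comm_foldx (g : M -> M) l m :
  (forall j w, g (x j w) = x j (g w)) -> forall v, g (foldx l m v) = foldx l m (g v).
Proof.
move=> H; elim: l => [|j l IH] v //=.
by rewrite (comm_iter _ (H j)) IH.
Qed.

Lemma foldx_iter l m j c v :
  iter c (x j) (foldx l m v) = foldx l m (iter c (x j) v).
Proof.
apply: comm_foldx => i w; symmetry; apply: comm_iter => u; exact: Hxx.
Qed.

Lemma foldxD l m1 m2 v : foldx l (m1 + m2) v = foldx l m1 (foldx l m2 v).
Proof.
elim: l => [|j l IH] //=.
by rewrite mnmDE iterD IH foldx_iter.
Qed.

Lemma foldx0 l v : foldx l 0%MM v = v.
Proof. by elim: l => [|j l IH] //=; rewrite mnm0E. Qed.

Lemma foldxU l j v : uniq l ->
  foldx l U_(j)%MM v = if j \in l then x j v else v.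
Proof.
elim: l => [|i l IH] //= /andP [nil ul].
rewrite IH // mnm1E in_cons.
have [->|ne] := eqVneq j i.
  by rewrite (negbTE nil) /=; case: (i \in l); rewrite /= ?eqxx /=.
by rewrite /=; case: (i \in l) => //=.
Qed.

Lemma xmonoU j v : xmono x U_(j)%MM v = x j v.
Proof. by rewrite xmonoE foldxU ?enum_uniq // mem_enum. Qed.

Lemma xmono0 v : xmono x 0%MM v = v.
Proof. exact: foldx0. Qed.

Lemma xmonoD m1 m2 v : xmono x (m1 + m2) v = xmono x m1 (xmono x m2 v).
Proof. exact: foldxD. Qed.

Lemma kl_xmono m : klinear (xmono x m).
Proof. exact: kl_foldx. Qed.

Lemma comm_xmono (g : M -> M) m :
  (forall j w, g (x j w) = x j (g w)) -> forall v, g (xmono x m v) = xmono x m (g v).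
Proof. exact: comm_foldx. Qed.

End Xmono.
Section Actp.
Variables (k : comNzRingType) (M : lmodType k) (n : nat).
Variable x : 'I_n -> M -> M.
Hypothesis Hx : forall j, klinear (x j).
Hypothesis Hxx : forall j l v, x j (x l v) = x l (x j v).

Lemma actpE (f : {mpoly k[n]}) i v : (msize f <= i)%N ->
  actp x f v = \sum_(m : 'X_{1..n < i}) f@_m *: xmono x m v.
Proof.
move=> le_fi; pose I : subFinType _ := 'X_{1..n < i}.
rewrite /actp (big_mksub I) ?msupp_uniq //=; first last.
  by move=> y /msize_mdeg_lt /leq_trans; apply.
rewrite big_rmcond //= => j /memN_msupp_eq0 ->.
by rewrite scale0r.
Qed.

Lemma actpD f g v : actp x (f + g) v = actp x f v + actp x g v.
Proof.
pose i := maxn (msize (f + g)) (maxn (msize f) (msize g)).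
have h1 : (msize f <= i)%N by rewrite /i (leq_trans _ (leq_maxr _ _)) ?leq_maxl.
have h2 : (msize g <= i)%N by rewrite /i (leq_trans _ (leq_maxr _ _)) ?leq_maxr.
rewrite (@actpE (f + g) i) ?leq_maxl // (@actpE f i) // (@actpE g i) //.
by rewrite -big_split; apply: eq_bigr => m _; rewrite mcoeffD scalerDl.
Qed.

Lemma actpZ c f v : actp x (c *: f) v = c *: actp x f v.
Proof.
pose i := maxn (msize (c *: f)) (msize f).
rewrite !(@actpE _ i) ?leq_maxl ?leq_maxr // scaler_sumr.
by apply: eq_bigr => m _; rewrite mcoeffZ scalerA.
Qed.

Lemma actp0 v : actp x 0 v = 0.
Proof. by rewrite /actp msupp0 big_nil. Qed.

Lemma actpN f v : actp x (- f) v = - actp x f v.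
Proof. by rewrite -[- f]scaleN1r actpZ scaleN1r. Qed.

Lemma actpB f g v : actp x (f - g) v = actp x f v - actp x g v.
Proof. by rewrite actpD actpN. Qed.

Lemma actp_sum (T : Type) (r : seq T) (F : T -> {mpoly k[n]}) v :
  actp x (\sum_(i <- r) F i) v = \sum_(i <- r) actp x (F i) v.
Proof.
elim/big_rec2: _ => [|i y1 y2 _ <-]; first exact: actp0.
exact: actpD.
Qed.

Lemma actpXm m v : actp x 'X_[m] v = xmono x m v.
Proof. by rewrite /actp msuppX big_seq1 mcoeffX eqxx scale1r. Qed.

Lemma actpX j v : actp x 'X_j v = x j v.
Proof. by rewrite actpXm xmonoU. Qed.

Lemma actp1 v : actp x 1 v = v.
Proof. by rewrite -mpolyX0 actpXm xmono0. Qed.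

Lemma actpC c v : actp x c%:MP v = c *: v.
Proof. by rewrite -[c%:MP]mulr1 mul_mpolyC actpZ actp1. Qed.

Lemma kl_actp f : klinear (actp x f).
Proof.
move=> c u v; rewrite /actp scaler_sumr -big_split; apply: eq_bigr => m _.
by rewrite (kl_xmono Hx) scalerDr !scalerA mulrC.
Qed.

Lemma comm_actp (g : M -> M) f : klinear g ->
  (forall j w, g (x j w) = x j (g w)) -> forall v, g (actp x f v) = actp x f (g v).
Proof.
move=> Hg H v; rewrite /actp kl_sum //; apply: eq_bigr => m _.
by rewrite klZ // comm_xmono.
Qed.

Lemma actpM f g v : actp x (f * g) v = actp x f (actp x g v).
Proof.
pose i := maxn (msize f) (msize g).
rewrite (@mpolywME _ _ f g i) ?leq_maxl ?leq_maxr // actp_sum.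
rewrite (@actpE g i) ?leq_maxr // (@actpE f i) ?leq_maxl //.
transitivity (\sum_(m1 : 'X_{1..n < i}) \sum_(m2 : 'X_{1..n < i})
   f@_m1 *: (g@_m2 *: xmono x m1 (xmono x m2 v))).
  rewrite pair_bigA /=; apply: eq_bigr => [[m1 m2]] _ /=.
  by rewrite actpZ actpXm xmonoD // scalerA.
apply: eq_bigr => m1 _; rewrite (kl_sum _ _ (kl_xmono Hx m1)) scaler_sumr.
by apply: eq_bigr => m2 _; rewrite (klZ (kl_xmono Hx m1)).
Qed.
End Actp.
Lemma mleadc_lreg_XB (R : comNzRingType) n (a b : 'I_n) : a != b ->
  GRing.lreg ('X_a - 'X_b : {mpoly R[n]}).
Proof.
move=> ab; apply: lreg_mleadc.
have nU : (mnm1 a) != (mnm1 b).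
  apply/eqP => /(congr1 (fun m : 'X_{1..n} => m a)); rewrite !mnm1E eqxx.
  by rewrite eq_sym (negbTE ab).
have [lt|lt|eq] := Order.TotalTheory.ltgtP (mnm1 a) (mnm1 b).
- rewrite mleadDr ?mleadN ?mleadXm // mcoeffB !mcoeffX eqxx (negbTE nU) sub0r.
  exact/lregN/lreg1.
- rewrite mleadDl ?mleadN ?mleadXm // mcoeffB !mcoeffX eqxx eq_sym (negbTE nU) subr0.
  exact/lreg1.
- by rewrite eq eqxx in nU.
Qed.

Lemma exdiv_spec (R : comNzRingType) n (D N g : {mpoly R[n]}) :
  GRing.lreg D -> N = D * g -> exdiv D N = g.
Proof.
move=> rD NE; rewrite /exdiv; case: excluded_middle_informative => [H|H].
  case: (constructive_indefinite_description _ H) => g0 /= E0.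
  by apply: rD; rewrite -E0.
by case: H; exists g.
Qed.

Lemma msymX1 (R : comNzRingType) n (s : 'S_n) j :
  msym s ('X_j : {mpoly R[n]}) = 'X_(s j).
Proof. by rewrite /msym mmapX mmap1U. Qed.

Lemma msymXn1 (R : comNzRingType) n (s : 'S_n) j p :
  msym s ('X_j ^+ p : {mpoly R[n]}) = 'X_(s j) ^+ p.
Proof.
elim: p => [|p IH]; first by rewrite !expr0 msym1.
by rewrite !exprS msymM msymX1 IH.
Qed.
Lemma gsimp (V : zmodType) (A B C : V) : A + B + C - A = B + C.
Proof. by rewrite addrAC (addrC A) addrK. Qed.

Section Main.
Variables (I : finType) (A : I -> I -> int) (d : I -> nat)
  (k : comNzRingType) (t : I -> I -> nat -> nat -> k) (w : I -> nat -> nat -> k)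
  (n : nat) (M : lmodType k) (e : {ffun 'I_n -> I} -> M -> M) (x : 'I_n -> M -> M)
  (tau : 'I_n -> M -> M).
Hypothesis HM : is_Rmodule A d t w e x tau.
Variables (nu : {ffun 'I_n -> I}) (a b : 'I_n).
Hypothesis Hab : consec a b.
Hypothesis Hnu : nu a = nu b.

Local Notation P := (Ppol A w (nu a) 'X_a 'X_b : {mpoly k[n]}).
Local Notation s := (sswap a b).
Local Notation T := (tau a).
Local Notation act := (actp x).

Lemma Hx j : klinear (x j). Proof. exact: (rm_lin_x HM). Qed.
Lemma Hxx j l v : x j (x l v) = x l (x j v). Proof. exact: (rm_xx HM). Qed.
Lemma HT : klinear T. Proof. exact: (rm_lin_tau HM). Qed.
Lemma He : klinear (e nu). Proof. exact: (rm_lin_e HM). Qed.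

Lemma ab_neq : a != b.
Proof. by apply/eqP => E; move: Hab; rewrite /consec E eq_sym (gtn_eqF (ltnSn _)). Qed.

Lemma act_e f m : act f (e nu m) = e nu (act f m).
Proof.
symmetry; apply: (comm_actp f He) => j v.
by rewrite (rm_xe HM).
Qed.

Lemma swap_nu : swapseq a b nu = nu.
Proof.
apply/ffunP => j; rewrite ffunE.
by case: tpermP => // ->; rewrite Hnu.
Qed.

Lemma T_e m : T (e nu m) = e nu (T m).
Proof. by rewrite (rm_taue HM _ _ Hab) swap_nu. Qed.

Lemma act_M f g v : act (f * g) v = act f (act g v).
Proof. exact: (actpM Hx Hxx). Qed.

Definition Cprop (g : {mpoly k[n]}) :=
  exists h, s g - g = ('X_a - 'X_b) * h /\
   forall m, T (act g (e nu m)) - act (s g) (T (e nu m)) = act (P * h) (e nu m).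

Lemma C0 : Cprop 0.
Proof.
exists 0; rewrite /sswap msym0 subrr mulr0; split => // m.
by rewrite mulr0 !actp0 (kl0 HT) subrr.
Qed.

Lemma C1 : Cprop 1.
Proof.
exists 0; rewrite /sswap msym1 subrr mulr0; split => // m.
by rewrite !actp1 mulr0 actp0 subrr.
Qed.

Lemma CD f g : Cprop f -> Cprop g -> Cprop (f + g).
Proof.
move=> [h1 [E1 H1]] [h2 [E2 H2]]; exists (h1 + h2); split.
  by rewrite /sswap msymD mulrDr -E1 -E2 opprD addrACA.
move=> m; rewrite /sswap msymD !actpD (klD HT) mulrDr actpD -H1 -H2.
by rewrite opprD addrACA.
Qed.

Lemma CZ c f : Cprop f -> Cprop (c *: f).
Proof.
move=> [h [E H]]; exists (c *: h); split.
  by rewrite /sswap msymZ -scalerBr E scalerAr.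
move=> m; rewrite /sswap msymZ !actpZ (klZ HT) -scalerAr actpZ -H.
by rewrite scalerBr.
Qed.

Lemma CM f g : Cprop f -> Cprop g -> Cprop (f * g).
Proof.
move=> [h1 [E1 H1]] [h2 [E2 H2]]; exists (s f * h2 + h1 * g); split.
  rewrite /sswap msymM; move: E1 E2; rewrite /sswap => E1 E2.
  apply/eqP; rewrite -subr_eq0; apply/eqP.
  have -> : msym (tperm a b) f * msym (tperm a b) g - f * g =
     msym (tperm a b) f * (msym (tperm a b) g - g) +
     (msym (tperm a b) f - f) * g by ring.
  by rewrite E1 E2; ring.
move=> m; rewrite /sswap msymM !act_M.
have F1 := H1 (act g m); rewrite -act_e in F1.
have F2 := H2 m.
have -> : T (act f (act g (e nu m))) = act (s f) (T (act g (e nu m)))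
   + act (P * h1) (act g (e nu m)) by rewrite -F1 addrC subrK.
have -> : T (act g (e nu m)) = act (s g) (T (e nu m)) + act (P * h2) (e nu m)
   by rewrite -F2 addrC subrK.
rewrite (klD (kl_actp Hx _)).
have -> : act (s f) (act (P * h2) (e nu m)) = act P (act (s f * h2) (e nu m))
  by rewrite -!act_M mulrCA.
have -> : act (P * h1) (act g (e nu m)) = act P (act (h1 * g) (e nu m))
  by rewrite -!act_M mulrA.
by rewrite actpD (klD (kl_actp Hx _)) addrAC (addrC (act (s f) _)) addrK.
Qed.
Lemma CX j : Cprop 'X_j.
Proof.
have ne := ab_neq.
exists (if j == a then -1 else if j == b then 1 else 0); split.
  rewrite /sswap msymX1.
  case: (eqVneq j a) => [->|ja]; first by rewrite tpermL; ring.
  case: (eqVneq j b) => [->|jb]; first by rewrite tpermR; ring.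
  by rewrite tpermD 1?eq_sym // subrr mulr0.
move=> m; rewrite /sswap msymX1 !actpX (rm_taux HM _ _ _ Hab) Hnu eqxx /=.
have [Ej|ja] := eqVneq j a; first by rewrite mulrN1 actpN.
have [Ej|jb] := eqVneq j b; first by rewrite mulr1.
by rewrite mulr0 actp0.
Qed.

Lemma Call g : Cprop g.
Proof.
rewrite [g]mpolyE; apply: (big_ind Cprop C0 CD) => m _; apply: CZ.
rewrite mpolyXE_id; apply: (big_ind Cprop C1 CM) => i _.
elim: (m i) => [|c IH]; first by rewrite expr0; exact: C1.
by rewrite exprS; apply: CM => //; exact: CX.
Qed.

Lemma Cdd g :
  (('X_a - 'X_b) * ddiff a b g = s g - g) /\
  (forall m, T (act g (e nu m)) - act (s g) (T (e nu m)) = act (P * ddiff a b g) (e nu m)).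
Proof.
have [h [E H]] := Call g.
have -> : ddiff a b g = h.
  by rewrite /ddiff; apply: exdiv_spec => //; exact: mleadc_lreg_XB ab_neq.
by split.
Qed.
Local Notation P' := (Ppol A w (nu a) 'X_b 'X_a : {mpoly k[n]}).

Lemma sP : s P = P'.
Proof.
rewrite /sswap /Ppol raddf_sum; apply: eq_bigr => p _.
rewrite raddf_sum; apply: eq_bigr => q _.
change (msym (tperm a b) (w (nu a) p q *: ('X_a ^+ p * 'X_b ^+ q)) = w (nu a) p q *: ('X_b ^+ p * 'X_a ^+ q) :> {mpoly k[n]}).
by rewrite msymZ msymM !msymXn1 tpermL tpermR.
Qed.

Lemma ss (g : {mpoly k[n]}) : msym (tperm a b) (msym (tperm a b) g) = g.
Proof. by rewrite -msymMm tperm2 msym1m. Qed.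

Lemma sX : msym (tperm a b) ('X_a - 'X_b : {mpoly k[n]}) = 'X_b - 'X_a.
Proof. by rewrite msymB !msymX1 tpermL tpermR. Qed.

Lemma lregX : GRing.lreg ('X_a - 'X_b : {mpoly k[n]}).
Proof. exact: mleadc_lreg_XB ab_neq. Qed.

Lemma tau2 m : T (T (e nu m)) = act (ddiff a b P) (T (e nu m)).
Proof. by rewrite (rm_tau2 HM _ _ Hab) Hnu eqxx. Qed.

Lemma act_comm p q v : act p (act q v) = act q (act p v).
Proof. by rewrite -!act_M mulrC. Qed.

Section WithF.
Variable f : {mpoly k[n]}.
Hypothesis Hf : forall m, act f (e nu m) = 0.

Lemma Hf' p m : act f (act p (e nu m)) = 0.
Proof. by rewrite act_e Hf. Qed.

Local Notation g0 := (ddiff a b f).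

Lemma sg0 : s g0 = g0.
Proof.
have [E _] := Cdd f.
have E2 := congr1 (msym (tperm a b)) E.
move: E E2; rewrite /sswap !msymM !msymB !ss !msymX1 tpermL tpermR => E E2.
by apply: lregX; rewrite /= E -opprB mulNr E2 opprB.
Qed.

Lemma dg0 : ddiff a b g0 = 0.
Proof.
have [E _] := Cdd g0; by apply: lregX; rewrite /= E sg0 subrr mulr0.
Qed.

Lemma Tg0 m : T (act g0 (e nu m)) = act g0 (T (e nu m)).
Proof.
have [_ H] := Cdd g0; have H' := H m; rewrite sg0 dg0 mulr0 actp0 in H'.
by apply/eqP; rewrite -subr_eq0 H'.
Qed.

Lemma step_i m : act (s f) (T (e nu m)) = - act (P * g0) (e nu m).
Proof.
have [_ H] := Cdd f; have := H m; rewrite Hf (kl0 HT) sub0r => <-.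
by rewrite opprK.
Qed.

Lemma stepB m : act ('X_a - 'X_b) (T (act g0 (e nu m))) = - act P (act g0 (e nu m)).
Proof.
rewrite Tg0 -act_M (proj1 (Cdd f)) actpB [in X in _ - X]T_e Hf subr0.
by rewrite step_i act_M.
Qed.

Lemma stepA m : act P (T (act g0 (e nu m))) = act (ddiff a b P) (act P (act g0 (e nu m))).
Proof.
have H := step_i (T m).
rewrite -T_e tau2 act_comm step_i (klN (kl_actp Hx _)) in H.
rewrite Tg0 -act_M; apply: oppr_inj; by rewrite -H act_M.
Qed.

Lemma key m : act (P' * (P * g0)) (e nu m) = 0.
Proof.
have H := congr1 (act P) (stepB m).
rewrite act_comm stepA -act_M (proj1 (Cdd P)) sP actpB (klN (kl_actp Hx _)) in H.
move/(congr1 (fun z => z + act P (act P (act g0 (e nu m))))): H.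
by rewrite subrK addNr !act_M.
Qed.

Lemma part1 m : act (g0 * P * P') (e nu m) = 0.
Proof.
have -> : g0 * P * P' = P' * (P * g0) by ring.
exact: key.
Qed.

Lemma part2 m : act (s f * P * P') (e nu m) = 0.
Proof.
have [E _] := Cdd f.
have -> : s f = f + ('X_a - 'X_b) * g0 by rewrite E addrC subrK.
have -> : (f + ('X_a - 'X_b) * g0) * P * P' =
  f * (P * P') + ('X_a - 'X_b) * (g0 * P * P') by ring.
by rewrite actpD act_M Hf' add0r act_M part1 (kl0 (kl_actp Hx _)).
Qed.

End WithF.
End Main.

Theorem lemma4p2
  (I : finType) (A : I -> I -> int) (d : I -> nat)
  (k : comNzRingType) (kdeg : nat -> pred k)
  (t : I -> I -> nat -> nat -> k) (w : I -> nat -> nat -> k)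
  (HA : cartan_datum A d) (Hk : graded_ring kdeg) (HQP : QP_datum A d kdeg t w)
  (n : nat) (Hn : (2 <= n)%N)
  (M : lmodType k) (e : {ffun 'I_n -> I} -> M -> M) (x : 'I_n -> M -> M)
  (tau : 'I_n -> M -> M) (HM : is_Rmodule A d t w e x tau)
  (nu : {ffun 'I_n -> I}) (a b : 'I_n) (Hab : consec a b) (Hnu : nu a = nu b)
  (f : {mpoly k[n]}) (Hf : forall m : M, actp x f (e nu m) = 0) :
  (forall m : M,
     actp x (ddiff a b f * Ppol A w (nu a) 'X_a 'X_b * Ppol A w (nu a) 'X_b 'X_a)
       (e nu m) = 0) /\
  (forall m : M,
     actp x (sswap a b f * Ppol A w (nu a) 'X_a 'X_b * Ppol A w (nu a) 'X_b 'X_a)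
       (e nu m) = 0).

Proof.
split=> m.
- exact: (part1 HM Hab Hnu Hf m).
- exact: (part2 HM Hab Hnu Hf m).
Qed.
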